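(* Let $0\le\eta_1\le\eta_2\le1$ and $T\ge0$, and assume that $(D_tP(t,T,\eta_i))_{0\le t\le T}$ is a $\mathbb{Q}$-martingale for $i=1,2$. Then for all $t\in[0,T]$, $$\mathbb{Q}\big(P(t,T,\eta_1)\le P(t,T,\eta_2)\big)=1.$$
   Context: Let $(\Omega,\mathcal{F},(\mathcal{F}_t)_{t\ge0},\mathbb{Q})$ be a filtered probability space. $L=(L_t)$ is an adapted, càdlàg, non-decreasing pure-jump process with values in $[0,1]$ (the loss/quality process). The discount factor is $D_t:=\exp(-\int_0^tr_sds)$ for a progressively measurable, locally integrable real short-rate process $(r_s)$. Bond prices are $P(t,T,\eta):=1_{\{L_t\le\eta\}}\exp\big(-\int_t^Tf(t,u,\eta)du\big)$, $0\le t\le T$, $\eta\in[0,1]$, for a real-valued forward rate field $f$ (so that $P(T,T,\eta)=1_{\{L_T\le\eta\}}$). *)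

(* Defs.v *)
From HB Require Import structures.
From mathcomp Require Import all_boot all_order all_algebra.
From mathcomp Require Import all_classical all_reals all_analysis.
Set Implicit Arguments. Unset Strict Implicit. Unset Printing Implicit Defensive.
Import Order.TTheory GRing.Theory Num.Theory.
Import numFieldNormedType.Exports.
Local Open Scope classical_set_scope.
Local Open Scope ring_scope.

Section defs.
Context {d : measure_display} {Omega : measurableType d} {R : realType}.

Definition filtration (F : R -> set (set Omega)) : Prop :=
  (forall t, sigma_algebra setT (F t) /\ F t `<=` measurable) /\
  (forall s t, s <= t -> F s `<=` F t).

Definition meas_wrt (G : set (set Omega)) (X : Omega -> R) : Prop :=
  forall B : set R, measurable B -> G (X @^-1` B).

Definition adapted (F : R -> set (set Omega)) (X : R -> Omega -> R) : Prop :=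
  forall t, 0 <= t -> meas_wrt (F t) (X t).

Definition cadlag (X : R -> Omega -> R) : Prop :=
  forall w t, 0 <= t ->
    (X^~ w x @[x --> t^'+] --> X t w) /\
    (0 < t -> cvg (X^~ w x @[x --> t^'-])).

Definition left_lim (X : R -> Omega -> R) (w : Omega) (s : R) : R :=
  lim (X^~ w x @[x --> s^'-]).

Definition pure_jump (X : R -> Omega -> R) : Prop :=
  forall w t, 0 <= t ->
    (X t w - X 0 w)%:E =
     \esum_(s in `]0, t]%classic) (X s w - left_lim X w s)%:E.

(** Progressive measurability: for each t >= 0, (s, w) |-> r s w restricted to
    [0,t] x Omega is B([0,t]) (x) F_t - measurable. *)
Definition rectangles (F : R -> set (set Omega)) (t : R) : set (set (R * Omega)) :=
  [set X | exists A C, [/\ measurable A, A `<=` `[0, t]%classic, F t C &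
                            X = A `*` C]].

Definition progressive (F : R -> set (set Omega)) (r : R -> Omega -> R) : Prop :=
  forall t, 0 <= t -> forall B : set R, measurable B ->
    <<s `[0, t]%classic `*` setT, rectangles F t >>
      ((`[0, t]%classic `*` setT) `&` ((fun p => r p.1 p.2) @^-1` B)).

Definition paths_locally_integrable (r : R -> Omega -> R) : Prop :=
  forall w t, 0 <= t ->
    (@lebesgue_measure R).-integrable `[0, t]%classic (fun s => (r s w)%:E).

Definition discount_factor (r : R -> Omega -> R) (t : R) (w : Omega) : R :=
  expR (- \int[@lebesgue_measure R]_(s in `[0, t]%classic) r s w).

Definition bond_price (L : R -> Omega -> R) (f : R -> R -> R -> Omega -> R)
    (t T eta : R) (w : Omega) : R :=
  (L t w <= eta)%R%:R *
  expR (- \int[@lebesgue_measure R]_(u in `[t, T]%classic) f t u eta w).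

(** (M_t)_{0 <= t <= T} is a Q-martingale w.r.t. F: adapted, integrable, and
    E[M_t | F_s] = M_s, i.e. int_A M_t dQ = int_A M_s dQ for all A in F_s. *)
Definition martingale_on (Q : probability Omega R) (F : R -> set (set Omega))
    (T : R) (M : R -> Omega -> R) : Prop :=
  (forall t, 0 <= t <= T ->
     meas_wrt (F t) (M t) /\ Q.-integrable setT (fun w => (M t w)%:E)) /\
  (forall s t, 0 <= s -> s <= t -> t <= T -> forall A, F s A ->
     (\int[Q]_(w in A) (M t w)%:E = \int[Q]_(w in A) (M s w)%:E)%E).

End defs.

(* Main.v *)
Require Import Defs.
From HB Require Import structures.
From mathcomp Require Import all_boot all_order all_algebra.
From mathcomp Require Import all_classical all_reals all_analysis.
From mathcomp Require Import measurable_realfun.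
Import Order.TTheory GRing.Theory Num.Theory.
Import numFieldNormedType.Exports.
Local Open Scope classical_set_scope.
Local Open Scope ring_scope.

Section helpers.
Context {d : measure_display} {Omega : measurableType d} {R : realType}.

Lemma sa_setI (G : set (set Omega)) : sigma_algebra setT G ->
  forall A B, G A -> G B -> G (A `&` B).
Proof.
rewrite /sigma_algebra => -[G0 GC GU] A B GA GB.
have -> : A `&` B = setT `\` (\bigcup_n (if n is 0%N then setT `\` A else setT `\` B)).
  apply/seteqP; split => x.
    move=> [Ax Bx]; split => //; case => -[|n] _ /= [_]; by [].
  move=> [_ /= H]; split.
    apply: contrapT => nA; apply: H; exists 0%N => //.
  apply: contrapT => nB; apply: H; exists 1%N => //.
apply: (GC); apply: (GU) => -[|n]; exact: (GC).
Qed.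

Lemma sa_lt (G : set (set Omega)) (X Y : Omega -> R) : sigma_algebra setT G ->
  meas_wrt G X -> meas_wrt G Y -> G [set w | Y w < X w].
Proof.
move=> sG mX mY.
pose B (n : nat) : set Omega := if @unpickle rat n is Some q then
  (Y @^-1` `]-oo, ratr q[) `&` (X @^-1` `]ratr q, +oo[) else set0.
have -> : [set w | Y w < X w] = \bigcup_n B n.
  apply/seteqP; split => w /=.
    move=> /rat_in_itvoo [q]; rewrite in_itv /= => /andP[h1 h2].
    exists (pickle q); first exact: I. rewrite /B pickleK.
    by split; rewrite /= in_itv /= ?h1 ?h2.
  case=> n _; rewrite /B; case: (unpickle n) => // q.
  rewrite /= !in_itv /= => -[h1 /andP[h2 _]]; exact: lt_trans h1 h2.
have [G0 _ GU] := sG; apply: (GU) => n; rewrite /B.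
case: (unpickle n) => [q|]; last by [].
apply: sa_setI => //.
  exact: (mY _ (measurable_itv _)).
exact: (mX _ (measurable_itv _)).
Qed.
End helpers.
Theorem mainTheorem9 (d : measure_display) (Omega : measurableType d)
  (R : realType) (Q : probability Omega R) (F : R -> set (set Omega))
  (L r : R -> Omega -> R) (f : R -> R -> R -> Omega -> R)
  (eta1 eta2 T : R) :
  filtration F ->
  adapted F L ->
  cadlag L ->
  (forall w s t, 0 <= s -> s <= t -> L s w <= L t w) ->
  (forall w t, 0 <= t -> 0 <= L t w <= 1) ->
  pure_jump L ->
  progressive F r ->
  paths_locally_integrable r ->
  0 <= eta1 -> eta1 <= eta2 -> eta2 <= 1 -> 0 <= T ->
  martingale_on Q F T (fun t w => discount_factor r t w * bond_price L f t T eta1 w) ->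
  martingale_on Q F T (fun t w => discount_factor r t w * bond_price L f t T eta2 w) ->
  forall t, 0 <= t <= T ->
    Q [set w | bond_price L f t T eta1 w <= bond_price L f t T eta2 w] = 1%E.

Proof.
move=> hF _ _ _ _ _ _ _ _ h12 _ _ [M1a M1b] [M2a M2b] t /andP[t0 tT].
pose X1 := fun s w => discount_factor r s w * bond_price L f s T eta1 w.
pose X2 := fun s w => discount_factor r s w * bond_price L f s T eta2 w.
rewrite -/X1 in M1a M1b. rewrite -/X2 in M2a M2b.
have [sG FM] := hF.1 t.
have [mX1 iX1] := M1a t (andb_true_intro (conj t0 tT)).
have [mX2 iX2] := M2a t (andb_true_intro (conj t0 tT)).
have FA : F t [set w | X2 t w < X1 t w] by apply: sa_lt.
set A := [set w | X2 t w < X1 t w] in FA *.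
have mA : measurable A by apply: FM.
have term : forall w, X1 T w <= X2 T w.
  move=> w; rewrite /X1 /X2 /bond_price set_itv1 !Rintegral_set1 oppr0 expR0 !mulr1.
  apply: ler_wpM2l; first exact: expR_ge0.
  rewrite ler_nat; case: (L T w <= eta1) /idP => h //=.
  by rewrite (le_trans h h12).
have [_ iX1T] := M1a T (andb_true_intro (conj (le_trans t0 tT) (lexx T))).
have [_ iX2T] := M2a T (andb_true_intro (conj (le_trans t0 tT) (lexx T))).
have iA g : Q.-integrable setT (fun w => (g w)%:E) -> Q.-integrable A (fun w => (g w)%:E).
  by apply: integrableS.
have Hle : (\int[Q]_(w in A) (X1 t w)%:E <= \int[Q]_(w in A) (X2 t w)%:E)%E.
  rewrite -(M1b t T t0 tT (lexx T) A FA) -(M2b t T t0 tT (lexx T) A FA).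
  apply: le_integral => //; [exact: iA|exact: iA|].
  by move=> w _; rewrite lee_fin term.
have mfX g : meas_wrt (F t) g -> measurable_fun setT g.
  by move=> mg _ B mB; rewrite setTI; apply: FM; apply: mg.
have H0 : (\int[Q]_(w in A) `|(X1 t w - X2 t w)%:E| = 0)%E.
  apply/eqP; rewrite eq_le; apply/andP; split; last first.
    by apply: integral_ge0 => w _; exact: abse_ge0.
  rewrite (eq_integral (fun w => (X1 t w)%:E - (X2 t w)%:E)%E); last first.
    move=> w; rewrite inE /A /= => hw.
    by rewrite ger0_norm ?subr_ge0 ?(ltW hw).
  rewrite (@integralB_EFin _ _ _ Q A (X1 t) (X2 t) mA); [by rewrite sube_le0|exact: iA|exact: iA].
have hae := (ae_eq_integral_abs Q mA _).1 H0.
have {hae} : ae_eq Q A (fun w => (X1 t w - X2 t w)%:E) (cst 0%R).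
  apply: hae.
  apply/measurable_EFinP; apply: (measurable_funS measurableT) => //.
  by apply: measurable_funB; apply: mfX.
case=> N [mN QN sub].
have QA : Q A = 0%E.
  apply/eqP; rewrite eq_le measure_ge0 andbT -QN; apply: le_measure; rewrite ?inE //.
  move=> w Aw; apply: sub => /(_ Aw) [] /eqP; rewrite subr_eq0 => /eqP h.
  by move: Aw; rewrite /A /= h ltxx.
have -> : [set w | bond_price L f t T eta1 w <= bond_price L f t T eta2 w] = ~` A.
  apply/seteqP; split => w /=; rewrite /A /X1 /X2 /= ltNge ler_pM2l ?expR_gt0;
    by case: (bond_price L f t T eta1 w <= _).
by rewrite probability_setC // QA sube0.
Qed.
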